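(* Let $V^{\bullet\bullet}$ be an $N=2$ supersymmetric complex. Then every row of $V^{\bullet\bullet}$ except possibly the $0$th row (i.e. each complex $(V^{\bullet,j},D_1)$ with $j\neq0$) is exact with respect to $D_1$, and every column except possibly the $0$th column (each $(V^{i,\bullet},D_2)$ with $i\ne0$) is exact with respect to $D_2$.
   Context: Let $G=\underline{\mathrm{Aut}}(\mathbb A^{0|2})$ be the group super-scheme of automorphisms of $\mathrm{Spec}\,\Lambda[\eta_1,\eta_2]$ ($\eta_i$ odd); its $R$-points are substitutions $\eta_i\mapsto a^i+b^i_1\eta_1+b^i_2\eta_2+c^i\eta_1\eta_2$ with $(b^i_j)$ invertible; it is isomorphic to $SL_{1|2}$, with Lie superalgebra $\mathrm{Der}\,\Lambda[\eta_1,\eta_2]$. An $N=2$ supersymmetric complex is a super vector space $V$ with an action of $G$. The action of the torus $\mathbb G_m\times\mathbb G_m$ (diagonal substitutions $\eta_i\mapsto b_i\eta_i$) gives a bigrading $V=\bigoplus V^{ij}$ on which $\Theta_1=\eta_1\partial/\partial\eta_1$ acts by $i$ and $\Theta_2=\eta_2\partial/\partial\eta_2$ by $j$; the odd derivations $D_1=\partial/\partial\eta_1$, $D_2=\partial/\partial\eta_2$ act as anticommuting square-zero differentials of bidegrees $(1,0)$ and $(0,1)$, making $V^{\bullet\bullet}$ a double complex; row $j$ means $V^{\bullet,j}$ and column $i$ means $V^{i,\bullet}$. *)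

(* Defs.v *)
From HB Require Import structures.
From mathcomp Require Import all_boot all_order all_algebra.
Set Implicit Arguments. Unset Strict Implicit. Unset Printing Implicit Defensive.
Import Order.TTheory GRing.Theory Num.Theory.
Local Open Scope ring_scope.

(* The Grassmann algebra  Lambda[eta1, eta2]  over a field k, as k^4 with    *)
(* basis  e0 = 1, e1 = eta1, e2 = eta2, e3 = eta1 eta2  (column vectors).    *)
(* Linear endomorphisms of it are 4x4 matrices acting on the left.           *)
Section Grassmann.
Variable k : fieldType.

Definition gc (a : 'cV[k]_4) (n : nat) : k := a (inord n) 0.

(* product in Lambda[eta1,eta2]: eta1^2 = eta2^2 = 0, eta2 eta1 = - eta1 eta2 *)
Definition gmul (a b : 'cV[k]_4) : 'cV[k]_4 :=
  \col_(i < 4) nth 0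
    [:: gc a 0 * gc b 0;
        gc a 0 * gc b 1 + gc a 1 * gc b 0;
        gc a 0 * gc b 2 + gc a 2 * gc b 0;
        gc a 0 * gc b 3 + gc a 3 * gc b 0 + gc a 1 * gc b 2 - gc a 2 * gc b 1]
    i.

Definition gpar (i : 'I_4) : bool := (i == 1 :> nat) || (i == 2 :> nat).

Definition ghomog (p : bool) (a : 'cV[k]_4) : Prop :=
  forall i : 'I_4, gpar i != p -> a i 0 = 0.

Definition is_sder (p : bool) (X : 'M[k]_4) : Prop :=
  (forall r a, ghomog r a -> ghomog (addb r p) (X *m a)) /\
  (forall r a b, ghomog r a ->
     X *m gmul a b = gmul (X *m a) b + (-1) ^+ (p && r) *: gmul a (X *m b)).

Definition sbr (p q : bool) (X Y : 'M[k]_4) : 'M[k]_4 :=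
  X *m Y - (-1) ^+ (p && q) *: (Y *m X).

(* D1 = d/d eta1 : e1 |-> e0, e3 |-> e2 *)
Definition dD1 : 'M[k]_4 :=
  \matrix_(i < 4, j < 4)
    (if ((i == 0 :> nat) && (j == 1 :> nat)) || ((i == 2 :> nat) && (j == 3 :> nat))
     then 1 else 0).
(* D2 = d/d eta2 : e2 |-> e0, e3 |-> - e1 *)
Definition dD2 : 'M[k]_4 :=
  \matrix_(i < 4, j < 4)
    (if (i == 0 :> nat) && (j == 2 :> nat) then 1
     else if (i == 1 :> nat) && (j == 3 :> nat) then -1 else 0).
(* Theta1 = eta1 d/d eta1 = diag(0,1,0,1) *)
Definition dTheta1 : 'M[k]_4 :=
  \matrix_(i < 4, j < 4) (if (i == j) && ((i == 1 :> nat) || (i == 3 :> nat)) then 1 else 0).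
(* Theta2 = eta2 d/d eta2 = diag(0,0,1,1) *)
Definition dTheta2 : 'M[k]_4 :=
  \matrix_(i < 4, j < 4) (if (i == j) && ((i == 2 :> nat) || (i == 3 :> nat)) then 1 else 0).

End Grassmann.

Section Complex.
Variables (k : fieldType) (V : lmodType k).

Definition is_subspace (S : V -> Prop) : Prop :=
  S 0 /\ forall (a : k) u v, S u -> S v -> S (a *: u + v).

Definition is_superspace (Vev Vod : V -> Prop) : Prop :=
  [/\ is_subspace Vev, is_subspace Vod,
      (forall v, exists v0 v1, [/\ Vev v0, Vod v1 & v = v0 + v1]) &
      (forall v, Vev v -> Vod v -> v = 0)].

Definition Vpar (Vev Vod : V -> Prop) (r : bool) : V -> Prop :=
  if r then Vod else Vev.

Definition Vbi (rho : 'M[k]_4 -> V -> V) (i j : int) (v : V) : Prop :=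
  rho (dTheta1 k) v = i%:~R *: v /\ rho (dTheta2 k) v = j%:~R *: v.

(* An action of Der Lambda[eta1,eta2] on the super vector space V, coming   *)
(* from an action of G = Aut(A^{0|2}): rho is linear, rho X  *)
(* is a linear operator of parity |X|, super brackets are respected (with   *)
(* the order reversal of a right action, so that D1, D2 have bidegrees      *)
(* (1,0), (0,1) as in the paper), and the torus G_m x G_m acts, i.e. V is   *)
(* the sum of the integral weight spaces V^{ij}.                            *)
Definition N2susy_complex (Vev Vod : V -> Prop) (rho : 'M[k]_4 -> V -> V) : Prop :=
  is_superspace Vev Vod /\
  [/\ (forall X (a : k) u v, rho X (a *: u + v) = a *: rho X u + rho X v),
      (forall X Y (a : k) v, rho (a *: X + Y) v = a *: rho X v + rho Y v),
      (forall p X r v, is_sder p X -> Vpar Vev Vod r v ->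
                       Vpar Vev Vod (addb r p) (rho X v)),
      (forall p q X Y v, is_sder p X -> is_sder q Y ->
         rho (sbr p q X Y) v = rho Y (rho X v) - (-1) ^+ (p && q) *: rho X (rho Y v))
    & (forall v, exists s : seq (int * int * V),
         (forall t, t \in s -> Vbi rho t.1.1 t.1.2 t.2) /\ v = \sum_(t <- s) t.2)].

End Complex.

(* Main.v *)
Require Import Defs.
From HB Require Import structures.
From mathcomp Require Import all_boot all_order all_algebra ring.
Import Order.TTheory GRing.Theory Num.Theory.
Local Open Scope ring_scope.



Section H.
Variable k : fieldType.

Lemma gcM (X : 'M[k]_4) a n : gc (X *m a) n =
  X (inord n) (inord 0) * gc a 0 + X (inord n) (inord 1) * gc a 1 +
  X (inord n) (inord 2) * gc a 2 + X (inord n) (inord 3) * gc a 3.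
Proof.
rewrite /gc mxE !big_ord_recl big_ord0 addr0 !addrA.
have e0 : (ord0 : 'I_4) = inord 0 by apply/val_inj; rewrite /= inordK.
have e1 : (lift ord0 ord0 : 'I_4) = inord 1 by apply/val_inj; rewrite /= inordK.
have e2 : (lift ord0 (lift ord0 ord0) : 'I_4) = inord 2 by apply/val_inj; rewrite /= inordK.
have e3 : (lift ord0 (lift ord0 (lift ord0 ord0)) : 'I_4) = inord 3 by apply/val_inj; rewrite /= inordK.
by rewrite e3 e2 e1 e0.
Qed.

Lemma gcD (a b : 'cV[k]_4) n : gc (a + b) n = gc a n + gc b n.
Proof. by rewrite /gc mxE. Qed.
Lemma gcZ (c : k) (a : 'cV[k]_4) n : gc (c *: a) n = c * gc a n.
Proof. by rewrite /gc mxE. Qed.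

Lemma gc_gmul (a b : 'cV[k]_4) n : (n < 4)%N -> gc (gmul a b) n =
  nth (0:k) [:: gc a 0 * gc b 0;
        gc a 0 * gc b 1 + gc a 1 * gc b 0;
        gc a 0 * gc b 2 + gc a 2 * gc b 0;
        gc a 0 * gc b 3 + gc a 3 * gc b 0 + gc a 1 * gc b 2 - gc a 2 * gc b 1] n.
Proof. by move=> Hn; rewrite /gc /gmul mxE inordK. Qed.

Lemma gc_eq (a b : 'cV[k]_4) : gc a 0 = gc b 0 -> gc a 1 = gc b 1 ->
  gc a 2 = gc b 2 -> gc a 3 = gc b 3 -> a = b.
Proof.
move=> h0 h1 h2 h3; apply/matrixP => i j; rewrite !ord1 -[i]inord_val.
by case: i => [[|[|[|[|?]]]] ?] //=.
Qed.

Lemma ghomogP r (a : 'cV[k]_4) : ghomog r a <->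
  (if r then gc a 0 = 0 /\ gc a 3 = 0 else gc a 1 = 0 /\ gc a 2 = 0).
Proof.
split.
  move=> H; rewrite /gc; case: r H => H; split; apply: H; rewrite /gpar inordK //.
move=> H i; rewrite -[i]inord_val; case: i => [[|[|[|[|?]]]] ?] //=;
  rewrite /gpar inordK //=; case: r H => [] [h1 h2]; rewrite // ?eqxx //;
  by rewrite -/(gc a _).
Qed.

End H.
Lemma inord_eq n m : (n < 4)%N -> (m < 4)%N -> ((inord n : 'I_4) == inord m) = (n == m).
Proof. by move=> Hn Hm; rewrite -val_eqE /= !inordK. Qed.


Section S.
Variable k : fieldType.
Definition H1 : 'M[k]_4 := \matrix_(i < 4, j < 4)
  (if (i == 3 :> nat) && (j == 2 :> nat) then 1 else 0).
Definition H2 : 'M[k]_4 := \matrix_(i < 4, j < 4)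
  (if (i == 3 :> nat) && (j == 1 :> nat) then 1 else 0).

Lemma sD1 : is_sder true (dD1 k). Proof. split.
  move=> [] a /ghomogP HH; apply/ghomogP; move: HH;
  rewrite !gcM !mxE ?inord_eq ?inordK //= => -[-> ->]; split; ring.
move=> [] a b /ghomogP HH; apply: gc_eq; move: HH;
  rewrite ?gcM ?gcD ?gcZ !gc_gmul //= ?gcM !mxE ?inord_eq ?inordK //= => -[-> ->];
  rewrite ?expr0 ?expr1 ?scale1r; ring. Qed.
Lemma sD2 : is_sder true (dD2 k). Proof. split.
  move=> [] a /ghomogP HH; apply/ghomogP; move: HH;
  rewrite !gcM !mxE ?inord_eq ?inordK //= => -[-> ->]; split; ring.
move=> [] a b /ghomogP HH; apply: gc_eq; move: HH;
  rewrite ?gcM ?gcD ?gcZ !gc_gmul //= ?gcM !mxE ?inord_eq ?inordK //= => -[-> ->];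
  rewrite ?expr0 ?expr1 ?scale1r; ring. Qed.
Lemma sT1 : is_sder false (dTheta1 k). Proof. split.
  move=> [] a /ghomogP HH; apply/ghomogP; move: HH;
  rewrite !gcM !mxE ?inord_eq ?inordK //= => -[-> ->]; split; ring.
move=> [] a b /ghomogP HH; apply: gc_eq; move: HH;
  rewrite ?gcM ?gcD ?gcZ !gc_gmul //= ?gcM !mxE ?inord_eq ?inordK //= => -[-> ->];
  rewrite ?expr0 ?expr1 ?scale1r; ring. Qed.
Lemma sT2 : is_sder false (dTheta2 k). Proof. split.
  move=> [] a /ghomogP HH; apply/ghomogP; move: HH;
  rewrite !gcM !mxE ?inord_eq ?inordK //= => -[-> ->]; split; ring.
move=> [] a b /ghomogP HH; apply: gc_eq; move: HH;
  rewrite ?gcM ?gcD ?gcZ !gc_gmul //= ?gcM !mxE ?inord_eq ?inordK //= => -[-> ->];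
  rewrite ?expr0 ?expr1 ?scale1r; ring. Qed.
Lemma sH1 : is_sder true H1. Proof. split.
  move=> [] a /ghomogP HH; apply/ghomogP; move: HH;
  rewrite !gcM !mxE ?inord_eq ?inordK //= => -[-> ->]; split; ring.
move=> [] a b /ghomogP HH; apply: gc_eq; move: HH;
  rewrite ?gcM ?gcD ?gcZ !gc_gmul //= ?gcM !mxE ?inord_eq ?inordK //= => -[-> ->];
  rewrite ?expr0 ?expr1 ?scale1r; ring. Qed.
Lemma sH2 : is_sder true H2. Proof. split.
  move=> [] a /ghomogP HH; apply/ghomogP; move: HH;
  rewrite !gcM !mxE ?inord_eq ?inordK //= => -[-> ->]; split; ring.
move=> [] a b /ghomogP HH; apply: gc_eq; move: HH;
  rewrite ?gcM ?gcD ?gcZ !gc_gmul //= ?gcM !mxE ?inord_eq ?inordK //= => -[-> ->];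
  rewrite ?expr0 ?expr1 ?scale1r; ring. Qed.
End S.


Section S.
Variable k : fieldType.
Ltac mxid := apply/matrixP => -[[|[|[|[|?]]]] ?] // -[[|[|[|[|?]]]] ?] //;
  rewrite !mxE !big_ord_recl !big_ord0 !mxE /=;
  rewrite ?mxE /=; ring.
Lemma e1 : sbr true true (dD1 k) (H1 k) = dTheta2 k. Proof. rewrite /sbr; mxid. Qed.
Lemma e2 : sbr false true (dTheta1 k) (H1 k) = H1 k. Proof. rewrite /sbr; mxid. Qed.
Lemma e3 : sbr false true (dTheta2 k) (H1 k) = 0. Proof. rewrite /sbr; mxid. Qed.
Lemma e4 : sbr true true (dD2 k) (H2 k) = - dTheta1 k. Proof. rewrite /sbr; mxid. Qed.
Lemma e5 : sbr false true (dTheta1 k) (H2 k) = 0. Proof. rewrite /sbr; mxid. Qed.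
Lemma e6 : sbr false true (dTheta2 k) (H2 k) = H2 k. Proof. rewrite /sbr; mxid. Qed.
End S.



Lemma intr_neq0_char (k : fieldType) (Hc : [pchar k] =i pred0) (j : int) :
  j != 0 -> (j%:~R : k) != 0.
Proof.
move/pcharf0P: Hc => Hc.
case: j => n /=; first by rewrite Hc.
by move=> _; rewrite NegzE intrN oppr_eq0 Hc.
Qed.

Theorem proposition2p3p7 (k : fieldType) (Hchar0 : [pchar k] =i pred0)
  (V : lmodType k) (Vev Vod : V -> Prop) (rho : 'M[k]_4 -> V -> V)
  (HV : N2susy_complex Vev Vod rho) :
  (forall (i j : int) (v : V), j != 0 -> Vbi rho i j v -> rho (dD1 k) v = 0 ->
     exists w, Vbi rho (i - 1) j w /\ rho (dD1 k) w = v) /\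
  (forall (i j : int) (v : V), i != 0 -> Vbi rho i j v -> rho (dD2 k) v = 0 ->
     exists w, Vbi rho i (j - 1) w /\ rho (dD2 k) w = v).
Proof.
case: HV => _ [Hlin Hlinx _ Hbr _].
have rho0 : forall X, rho X 0 = 0.
  move=> X; have h := Hlin X 1 0 0; rewrite !scale1r !addr0 in h.
  by apply/(addrI (rho X 0)); rewrite addr0 -h.
have rhoZ : forall X c u, rho X (c *: u) = c *: rho X u.
  by move=> X c u; have h := Hlin X c u 0; rewrite !addr0 rho0 addr0 in h.
have rho0X : forall v, rho 0 v = 0.
  move=> v; have h := Hlinx 0 0 1 v; rewrite !scale1r !addr0 in h.
  by apply/(addrI (rho 0 v)); rewrite addr0 -h.
have rhoN : forall X v, rho (- X) v = - rho X v.
  by move=> X v; have := Hlinx X 0 (-1) v; rewrite addr0 rho0X addr0 !scaleN1r.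
split.
- move=> i j v j0 [T1 T2] Dv.
  have hb := Hbr _ _ _ _ v (sD1 k) (sH1 k).
  rewrite e1 T2 Dv rho0 /= expr1 scaleN1r sub0r opprK in hb.
  have h2 := Hbr _ _ _ _ v (sT1 k) (sH1 k).
  rewrite e2 T1 rhoZ /= expr0 scale1r in h2.
  have h3 := Hbr _ _ _ _ v (sT2 k) (sH1 k).
  rewrite e3 rho0X T2 rhoZ /= expr0 scale1r in h3.
  have jn := @intr_neq0_char k Hchar0 j j0.
  exists ((j%:~R)^-1 *: rho (H1 k) v).
  split; [split|].
  + rewrite rhoZ.
    have -> : rho (dTheta1 k) (rho (H1 k) v) = i%:~R *: rho (H1 k) v - rho (H1 k) v.
      by rewrite {3}h2 opprB addrC subrK.
    by rewrite intrB scalerBl scale1r !scalerA mulrC scalerBr scalerA.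
  + rewrite rhoZ.
    have -> : rho (dTheta2 k) (rho (H1 k) v) = j%:~R *: rho (H1 k) v.
      by move/eqP: h3; rewrite eq_sym subr_eq0 => /eqP.
    by rewrite !scalerA mulrC.
  + by rewrite rhoZ -hb scalerA mulVf // scale1r.
- move=> i j v i0 [T1 T2] Dv.
  have hb := Hbr _ _ _ _ v (sD2 k) (sH2 k).
  rewrite e4 rhoN T1 Dv rho0 /= expr1 scaleN1r sub0r opprK in hb.
  have h2 := Hbr _ _ _ _ v (sT2 k) (sH2 k).
  rewrite e6 T2 rhoZ /= expr0 scale1r in h2.
  have h3 := Hbr _ _ _ _ v (sT1 k) (sH2 k).
  rewrite e5 rho0X T1 rhoZ /= expr0 scale1r in h3.
  have jn := @intr_neq0_char k Hchar0 i i0.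
  exists ((- i%:~R)^-1 *: rho (H2 k) v).
  split; [split|].
  + rewrite rhoZ.
    have -> : rho (dTheta1 k) (rho (H2 k) v) = i%:~R *: rho (H2 k) v.
      by move/eqP: h3; rewrite eq_sym subr_eq0 => /eqP.
    by rewrite !scalerA mulrC.
  + rewrite rhoZ.
    have -> : rho (dTheta2 k) (rho (H2 k) v) = j%:~R *: rho (H2 k) v - rho (H2 k) v.
      by rewrite {3}h2 opprB addrC subrK.
    by rewrite intrB scalerBl scale1r !scalerA mulrC scalerBr scalerA.
  + rewrite rhoZ -hb -scaleNr scalerA mulVf ?scale1r //.
    by rewrite oppr_eq0.
Qed.
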